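(* Let $\beta\in[0,1)$ and let $\lambda$ be a principal eigenvalue of $\Delta_\beta$. Then $\lambda\le1$. Moreover, if $\beta\in(0,\tfrac12]$, then $\lambda<1$.
   Context: Tree: for an integer $m\ge2$, $\mathbb{T}_m$ has vertices the root $\emptyset$ and all finite sequences $(\emptyset,a_1,\dots,a_k)$, $a_i\in\{0,\dots,m-1\}$; $|x|$ is the level, successors of $x$ are $(x,i)$, $\hat x$ is the immediate predecessor of $x\ne\emptyset$. A branch is an infinite sequence $(x_n)_{n\ge0}$ with $x_0=\emptyset$, $x_{n+1}$ a successor of $x_n$; $\partial\mathbb{T}_m$ is the set of branches; $\lim_{x\to y}u(x)=\lim_n u(x_n)$ for $y=(x_n)$. Operator: $p_\beta=1$ if $\beta=0$, $p_\beta=\beta/(1-\beta)$ if $\beta\in(0,1)$. $\Delta_\beta u(\emptyset)=\frac1m\sum_{i=0}^{m-1}u(\emptyset,i)-u(\emptyset)$ and, for $x\ne\emptyset$, $\Delta_\beta u(x)=\big(\beta u(\hat x)+\frac{1-\beta}{m}\sum_{i=0}^{m-1}u(x,i)-u(x)\big)p_\beta^{-|x|}$. Eigenvalues: $\lambda\in\mathbb{R}$ is an eigenvalue of $\Delta_\beta$ if there is a bounded $u:\mathbb{T}_m\to\mathbb{R}$, $u\not\equiv0$, with $-\Delta_\beta u=\lambda u$ on $\mathbb{T}_m$ and $\lim_{x\to y}u(x)=0$ for every $y\in\partial\mathbb{T}_m$. An eigenvalue $\lambda>0$ is principal if it has a non-negative eigenfunction. *)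

(* Defs.v *)
From HB Require Import structures.
From mathcomp Require Import all_boot all_order all_algebra.
From mathcomp Require Import all_classical all_reals all_analysis.
Set Implicit Arguments. Unset Strict Implicit. Unset Printing Implicit Defensive.
Import Order.TTheory GRing.Theory Num.Theory.
Import numFieldNormedType.Exports.
Local Open Scope classical_set_scope.
Local Open Scope ring_scope.

(* Vertices of T_m: a vertex (root, a_1, ..., a_k) is encoded as the list
   [:: a_k; ...; a_1] (most recent letter first).  Root = [::],
   successor (x,i) = i :: x, predecessor of i :: x is x, level = size. *)
Definition vertex (m : nat) := seq 'I_m.

Definition level (m : nat) (x : vertex m) : nat := size x.

Definition is_branch (m : nat) (xs : nat -> vertex m) : Prop :=
  xs 0%N = [::] /\ forall n : nat, exists i : 'I_m, xs n.+1 = i :: xs n.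

Definition p_beta (R : realType) (beta : R) : R :=
  if beta == 0 then 1 else beta / (1 - beta).

Definition Delta (R : realType) (m : nat) (beta : R) (u : vertex m -> R)
  (x : vertex m) : R :=
  match x with
  | [::] => m%:R^-1 * (\sum_(i < m) u (i :: [::])) - u [::]
  | _ :: xh =>
      (beta * u xh + (1 - beta) / m%:R * (\sum_(i < m) u (i :: x)) - u x)
        * (p_beta beta ^+ level x)^-1
  end.

Definition bounded_fun (R : realType) (m : nat) (u : vertex m -> R) : Prop :=
  exists M : R, forall x, `|u x| <= M.

Definition eigenfunction (R : realType) (m : nat) (beta lambda : R)
  (u : vertex m -> R) : Prop :=
  [/\ bounded_fun u,
      exists x, u x != 0,
      forall x, - Delta beta u x = lambda * u x &
      forall xs : nat -> vertex m, is_branch xs ->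
        ((fun n => u (xs n)) @ \oo --> (0 : R))%classic].

Definition is_eigenvalue (R : realType) (m : nat) (beta lambda : R) : Prop :=
  exists u : vertex m -> R, eigenfunction beta lambda u.

Definition principal_eigenvalue (R : realType) (m : nat) (beta lambda : R)
  : Prop :=
  0 < lambda /\
  exists u : vertex m -> R, eigenfunction beta lambda u /\ forall x, 0 <= u x.

(* Main.v *)
Require Import Defs.
From HB Require Import structures.
From mathcomp Require Import all_boot all_order all_algebra.
From mathcomp Require Import all_classical all_reals all_analysis.
From mathcomp Require Import ring lra.
Import Order.TTheory GRing.Theory Num.Theory.
Local Open Scope ring_scope.

Lemma pb_neq0 (R : realType) (beta : R) : 0 <= beta -> beta < 1 -> p_beta beta != 0.
Proof.
move=> h0 h1; rewrite /p_beta; case: ifP => [_|b0]; first exact: oner_neq0.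
apply: mulf_neq0; first by apply/negP => /eqP e; move: b0; rewrite e eqxx.
rewrite invr_eq0 subr_eq0; apply/eqP => e; move: h1; by rewrite -e ltxx.
Qed.

Lemma sum0_each (R : realType) (m : nat) (f : 'I_m -> R) :
  (forall i, 0 <= f i) -> \sum_(i < m) f i = 0 -> forall i, f i = 0.
Proof.
move=> hf hs i; have := psumr_eq0P (P := predT) (F := f) (fun i _ => hf i) hs.
by move=> h; apply: h.
Qed.

Theorem lemma3p2 (R : realType) (m : nat) (beta lambda : R) :
  (2 <= m)%N -> 0 <= beta -> beta < 1 ->
  @principal_eigenvalue R m beta lambda ->
  lambda <= 1 /\ (0 < beta -> beta <= 2^-1 -> lambda < 1).
Proof.
move=> hm hb0 hb1 [hl [u [[_ [x0 hx0] hD _] hpos]]].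
have m0 : (m%:R : R) != 0 by rewrite pnatr_eq0 -lt0n; apply: leq_trans hm.
have mpos : (0 : R) < m%:R by rewrite ltr0n; apply: leq_trans hm.
have Hnr : forall (i : 'I_m) (x : vertex m),
   beta * u x + (1 - beta) / m%:R * (\sum_(j < m) u (j :: i :: x)) - u (i :: x)
   = - lambda * u (i :: x) * p_beta beta ^+ (size x).+1.
  move=> i x; have := hD (i :: x); rewrite /Delta /level /=.
  have pn : p_beta beta ^+ (size x).+1 != 0 by rewrite expf_neq0 // pb_neq0.
  move=> e; apply: (mulIf (invr_neq0 pn)); rewrite mulfK //.
  by rewrite -[LHS]opprK e mulNr.
have Hroot : m%:R^-1 * (\sum_(i < m) u (i :: [::])) = (1 - lambda) * u [::].
  have := hD [::]; rewrite /Delta => e.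
  have : m%:R^-1 * (\sum_(i < m) u (i :: [::])) = u [::] - lambda * u [::].
    by rewrite -e; ring.
  by move=> ->; ring.
have sum_ge0 : forall x : vertex m, 0 <= \sum_(i < m) u (i :: x).
  by move=> x; apply: sumr_ge0 => i _; exact: hpos.
have u0pos : 0 < u [::].
  rewrite lt_def hpos andbT; apply/eqP => z.
  have Q : forall x : vertex m, u x = 0 /\ forall i : 'I_m, u (i :: x) = 0.
    elim => [|j x [IH1 IH2]].
      split => //; apply: sum0_each; first by move=> i; exact: hpos.
      move: Hroot; rewrite z mulr0 => /eqP; rewrite mulf_eq0 invr_eq0 (negbTE m0) /=.
      by move/eqP.
    split; first exact: IH2.
    apply: sum0_each; first by move=> i; exact: hpos.
    have := Hnr j x; rewrite IH1 IH2 !mulr0 add0r subr0 mul0r.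
    move/eqP; rewrite mulf_eq0 => /orP [|/eqP //].
    rewrite mulf_eq0 invr_eq0 (negbTE m0) orbF subr_eq0 => /eqP e.
    by move: hb1; rewrite -e ltxx.
  by move/eqP: hx0; apply; case: (Q x0).
have avg_ge0 : 0 <= m%:R^-1 * (\sum_(i < m) u (i :: [::])).
  by rewrite mulr_ge0 // invr_ge0 ltW.
have l1 : lambda <= 1.
  rewrite -subr_ge0; move: avg_ge0; rewrite Hroot pmulr_lge0 //.
split => // bpos _.
rewrite lt_neqAle l1 andbT; apply/eqP => l1e.
move: Hroot; rewrite l1e subrr mul0r => /eqP; rewrite mulf_eq0 invr_eq0 (negbTE m0) /=.
move/eqP => s0.
have c0 := @sum0_each R m (fun i => u (i :: [::])) (fun i => hpos _) s0.
have ord0m : 'I_m by exists 0%N; apply: leq_trans hm.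
have := Hnr ord0m [::]; rewrite (c0 ord0m) subr0 mulr0 mul0r => e.
have h1 : 0 < beta * u [::] by exact: mulr_gt0.
have h2 : 0 <= (1 - beta) / m%:R * (\sum_(j < m) u (j :: ord0m :: [::])).
  apply: mulr_ge0; last exact: sum_ge0.
  apply: divr_ge0; last exact: ltW.
  by rewrite subr_ge0 ltW.
move: e; lra.
Qed.
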